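(* Let $X, Y \subseteq \omega$. If there exists an embedding $f : \mathcal{B}^X \hookrightarrow \mathcal{K}_2^Y$ then $X' \le_T Y$.
   Context: A partial combinatory algebra (pca) is a set $A$ with a partial binary application $\cdot$ containing distinct elements $\mathrm{s},\mathrm{k}$ with $\mathrm{k}ab\downarrow = a$, $\mathrm{s}ab\downarrow$, and $\mathrm{s}abc \simeq (ac)(bc)$. Given pcas $\mathcal{A},\mathcal{B}$, an embedding $\mathcal{A}\hookrightarrow\mathcal{B}$ is an injection $f$ such that whenever $aa'\downarrow$ in $\mathcal{A}$, $f(a)f(a')\downarrow = f(aa')$. Kleene's second model $\mathcal{K}_2$ is taken with carrier $\omega^\omega$ and application $g\cdot h = \Phi^{g\oplus h}_{g(0)}$, where $\Phi_e$ is the $e$-th Turing functional and $g\cdot h$ is defined iff the function on the right is total. Van Oosten's sequential computation model $\mathcal{B}$ is the same definition but with carrier the set of partial functions $\omega\rightharpoonup\omega$ (application always defined). For $X\subseteq\omega$, $\mathcal{K}_2^X$ is the sub-pca of $X$-computable total functions and $\mathcal{B}^X$ the sub-pca of partial $X$-computable functions. $X'$ denotes the halting set relativized to $X$. *)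

(* Defs.v *)
From Stdlib Require Import Arith.

Definition pair (x y : nat) : nat := (x + y) * (x + y + 1) / 2 + y.

Fixpoint unpair (z : nat) : nat * nat :=
  match z with
  | 0 => (0, 0)
  | S z' => let (x, y) := unpair z' in
            match x with
            | 0 => (S y, 0)
            | S x' => (x', S y)
            end
  end.

Inductive code : Type :=
| cZero : code
| cSucc : code
| cId   : code
| cFst  : code
| cSnd  : code
| cOra  : code
| cComp : code -> code -> code       (* cComp f g = f o g *)
| cPair : code -> code -> code
| cRec  : code -> code -> code
| cMu   : code -> code.

(* Goedel numbering (injective); non-code numbers index the empty function. *)
Fixpoint encode (c : code) : nat :=
  match c with
  | cZero => pair 0 0
  | cSucc => pair 1 0
  | cId => pair 2 0
  | cFst => pair 3 0
  | cSnd => pair 4 0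
  | cOra => pair 5 0
  | cComp f g => pair 6 (pair (encode f) (encode g))
  | cPair f g => pair 7 (pair (encode f) (encode g))
  | cRec f g => pair 8 (pair (encode f) (encode g))
  | cMu f => pair 9 (encode f)
  end.

Inductive eval (o : nat -> option nat) : code -> nat -> nat -> Prop :=
| eZero x : eval o cZero x 0
| eSucc x : eval o cSucc x (S x)
| eId x : eval o cId x x
| eFst x : eval o cFst x (fst (unpair x))
| eSnd x : eval o cSnd x (snd (unpair x))
| eOra x v : o x = Some v -> eval o cOra x v
| eComp f g x y z : eval o g x y -> eval o f y z -> eval o (cComp f g) x z
| ePair f g x a b : eval o f x a -> eval o g x b -> eval o (cPair f g) x (pair a b)
| eRec0 f g x a : eval o f x a -> eval o (cRec f g) (pair x 0) a
| eRecS f g x n r a : eval o (cRec f g) (pair x n) r ->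
    eval o g (pair x (pair n r)) a -> eval o (cRec f g) (pair x (S n)) a
| eMu f x y : eval o f (pair x y) 0 ->
    (forall z, z < y -> exists v, v <> 0 /\ eval o f (pair x z) v) ->
    eval o (cMu f) x y.

Definition Phi (e : nat) (o : nat -> option nat) (n m : nat) : Prop :=
  exists c, encode c = e /\ eval o c n m.

Definition join (g h : nat -> option nat) : nat -> option nat :=
  fun n => if Nat.odd n then h (Nat.div2 n) else g (Nat.div2 n).

Definition tot (g : nat -> nat) : nat -> option nat := fun n => Some (g n).

Definition chi (X : nat -> bool) : nat -> option nat :=
  fun n => Some (if X n then 1 else 0).

Definition K2app (g h k : nat -> nat) : Prop :=
  forall n, Phi (g 0) (join (tot g) (tot h)) n (k n).

Definition Bapp (g h k : nat -> option nat) : Prop :=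
  forall n m, k n = Some m <->
    exists e, g 0 = Some e /\ Phi e (join g h) n m.

Definition partial_computable_in (X : nat -> bool) (a : nat -> option nat) : Prop :=
  exists e, forall n m, a n = Some m <-> Phi e (chi X) n m.

Definition computable_in (Y : nat -> bool) (g : nat -> nat) : Prop :=
  exists e, forall n, Phi e (chi Y) n (g n).

Definition BX (X : nat -> bool) : Type :=
  { a : nat -> option nat | partial_computable_in X a }.

Definition K2Y (Y : nat -> bool) : Type :=
  { g : nat -> nat | computable_in Y g }.

Definition pca_embedding (X Y : nat -> bool) (f : BX X -> K2Y Y) : Prop :=
  (forall a b, proj1_sig (f a) = proj1_sig (f b) -> proj1_sig a = proj1_sig b) /\
  (forall a a' k : BX X, Bapp (proj1_sig a) (proj1_sig a') (proj1_sig k) ->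
     K2app (proj1_sig (f a)) (proj1_sig (f a')) (proj1_sig (f k))).

Definition jump (X : nat -> bool) (e : nat) : Prop := exists m, Phi e (chi X) e m.

Definition turing_le (A : nat -> Prop) (Y : nat -> bool) : Prop :=
  exists e, forall n, (A n -> Phi e (chi Y) n 1) /\ (~ A n -> Phi e (chi Y) n 0).

(* Main.v *)
Require Import Defs.
From Stdlib Require Import Arith Lia List Classical ClassicalEpsilon FunctionalExtensionality.
Import ListNotations.


Lemma tri_S n : (S n) * (S n + 1) / 2 = n * (n + 1) / 2 + S n.
Proof.
  replace (S n * (S n + 1)) with (n * (n + 1) + S n * 2) by lia.
  rewrite Nat.div_add by lia. reflexivity.
Qed.

Lemma pair_next0 b : pair (S b) 0 = S (pair 0 b).
Proof. unfold pair. rewrite !Nat.add_0_r, Nat.add_0_l.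
  replace (S b) with (S b) by reflexivity. rewrite tri_S. lia. Qed.

Lemma pair_nextS a b : pair a (S b) = S (pair (S a) b).
Proof. unfold pair. replace (a + S b) with (S a + b) by lia. lia. Qed.

Lemma unpair_pair_aux : forall s y x, x + y = s -> unpair (pair x y) = (x, y).
Proof.
  induction s as [|s IHs]; intros y x H.
  - assert (x = 0) by lia; assert (y = 0) by lia; subst. reflexivity.
  - induction y as [|y IHy] in x, H |- *.
    + destruct x as [|x]; [lia|]. rewrite pair_next0. cbn [unpair].
      rewrite (IHs x 0) by lia. reflexivity.
    + rewrite pair_nextS. cbn [unpair]. rewrite (IHy (S x)) by lia. reflexivity.
Qed.

Lemma unpair_pair x y : unpair (pair x y) = (x, y).
Proof. apply (unpair_pair_aux (x + y)); lia. Qed.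

Lemma pair_unpair z : pair (fst (unpair z)) (snd (unpair z)) = z.
Proof.
  induction z as [|z IH]; [reflexivity|].
  cbn [unpair]. destruct (unpair z) as [x y] eqn:E. cbn [fst snd] in IH |- *.
  destruct x as [|x]; cbn [fst snd].
  - rewrite pair_next0; congruence.
  - rewrite pair_nextS. congruence.
Qed.

Lemma pair_inj a b c d : pair a b = pair c d -> a = c /\ b = d.
Proof. intro H. pose proof (f_equal unpair H) as H'. rewrite !unpair_pair in H'.
  inversion H'; auto. Qed.

Arguments pair : simpl never.
Arguments unpair : simpl never.

Lemma encode_inj : forall c1 c2, encode c1 = encode c2 -> c1 = c2.
Proof.
  induction c1; destruct c2; cbn; intro H;
  repeat match goal with
  | H : pair _ _ = pair _ _ |- _ => apply pair_inj in H; destruct H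
  end; try discriminate; try reflexivity;
  try (f_equal; auto).
Qed.


Fixpoint den (c : code) (x : nat) : nat :=
  match c with
  | cZero => 0
  | cSucc => S x
  | cId => x
  | cFst => fst (unpair x)
  | cSnd => snd (unpair x)
  | cOra => 0
  | cComp f g => den f (den g x)
  | cPair f g => pair (den f x) (den g x)
  | cRec f g => let (y, n) := unpair x in
      nat_rect (fun _ => nat) (den f y) (fun m r => den g (pair y (pair m r))) n
  | cMu _ => 0
  end.

Fixpoint pureb (c : code) : bool :=
  match c with
  | cOra => false
  | cMu _ => false
  | cComp f g | cPair f g | cRec f g => pureb f && pureb g
  | _ => true
  end.

Lemma pure_den : forall c o x, pureb c = true -> eval o c x (den c x).
Proof.
  induction c; intros o x Hp; cbn in Hp; try discriminate;
  try (apply Bool.andb_true_iff in Hp; destruct Hp as [Hp1 Hp2]).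
  - constructor.
  - constructor.
  - constructor.
  - constructor.
  - constructor.
  - cbn. eapply eComp; [apply IHc2 | apply IHc1]; auto.
  - cbn. constructor; eauto.
  - cbn. rewrite <- (pair_unpair x). rewrite unpair_pair.
    generalize (fst (unpair x)) as y. generalize (snd (unpair x)) as n.
    induction n; intro y; cbn.
    + constructor. auto.
    + econstructor; eauto.
Qed.

Lemma inv_rec o f g z y : eval o (cRec f g) z y ->
  (exists x, z = pair x 0 /\ eval o f x y) \/
  (exists x n r, z = pair x (S n) /\ eval o (cRec f g) (pair x n) r /\
     eval o g (pair x (pair n r)) y).
Proof. intro H; inversion H; subst; [left|right]; eauto 10. Qed.

Lemma inv_rec0 o f g x y : eval o (cRec f g) (pair x 0) y -> eval o f x y.
Proof. intro H; apply inv_rec in H as [[x' [E H]]|[x' [n [r [E _]]]]];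
  apply pair_inj in E; destruct E; subst; auto; discriminate. Qed.

Lemma inv_recS o f g x n y : eval o (cRec f g) (pair x (S n)) y ->
  exists r, eval o (cRec f g) (pair x n) r /\ eval o g (pair x (pair n r)) y.
Proof. intro H; apply inv_rec in H as [[x' [E H]]|[x' [n' [r [E [H1 H2]]]]]];
  apply pair_inj in E; destruct E as [E1 E2]; subst; [discriminate|].
  injection E2 as ->. eauto. Qed.

Lemma inv_mu o f x y : eval o (cMu f) x y ->
  eval o f (pair x y) 0 /\ (forall z, z < y -> exists v, v <> 0 /\ eval o f (pair x z) v).
Proof. intro H; inversion H; subst; auto. Qed.

Lemma inv_comp o f g x z : eval o (cComp f g) x z -> exists y, eval o g x y /\ eval o f y z.
Proof. intro H; inversion H; subst; eauto. Qed.

Lemma inv_pair o f g x z : eval o (cPair f g) x z ->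
  exists a b, z = pair a b /\ eval o f x a /\ eval o g x b.
Proof. intro H; inversion H; subst; eauto. Qed.

Lemma eval_det : forall c o x y1 y2, eval o c x y1 -> eval o c x y2 -> y1 = y2.
Proof.
  induction c; intros o x y1 y2 H1 H2;
  try (inversion H1; inversion H2; subst; congruence).
  - apply inv_comp in H1 as [a [A1 A2]]; apply inv_comp in H2 as [b [B1 B2]].
    pose proof (IHc2 _ _ _ _ A1 B1); subst. eauto.
  - apply inv_pair in H1 as [a [b [-> [A1 A2]]]]; apply inv_pair in H2 as [a' [b' [-> [B1 B2]]]].
    f_equal; eauto.
  - rewrite <- (pair_unpair x) in H1, H2.
    revert y1 y2 H1 H2. generalize (fst (unpair x)) as y. generalize (snd (unpair x)) as n.
    induction n; intros y y1 y2 H1 H2.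
    + apply inv_rec0 in H1; apply inv_rec0 in H2; eauto.
    + apply inv_recS in H1 as [r [A1 A2]]; apply inv_recS in H2 as [r' [B1 B2]].
      pose proof (IHn _ _ _ A1 B1); subst; eauto.
  - apply inv_mu in H1 as [A1 A2]; apply inv_mu in H2 as [B1 B2].
    destruct (lt_eq_lt_dec y1 y2) as [[Hl|He]|Hl]; auto.
    + destruct (B2 _ Hl) as [v [Hv Hv']]. exfalso; apply Hv; eapply IHc; eauto.
    + destruct (A2 _ Hl) as [v [Hv Hv']]. exfalso; apply Hv; eapply IHc; eauto.
Qed.

Lemma pure_iff c o x y : pureb c = true -> (eval o c x y <-> y = den c x).
Proof. intro Hp; split; intro H.
  - eapply eval_det; eauto using pure_den.
  - subst; apply pure_den; auto. Qed.

Lemma Phi_code c o x v m : eval o c x v -> (Phi (encode c) o x m <-> m = v).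
Proof. intro H; split.
  - intros [c' [E H']]. apply encode_inj in E; subst. eapply eval_det; eauto.
  - intros ->. exists c; auto. Qed.

Lemma Phi_det e o x m1 m2 : Phi e o x m1 -> Phi e o x m2 -> m1 = m2.
Proof. intros [c [E H]] [c' [E' H']]. subst. apply encode_inj in E'; subst.
  eapply eval_det; eauto. Qed.

Fixpoint subst (c D : code) : code :=
  match c with
  | cOra => D
  | cComp f g => cComp (subst f D) (subst g D)
  | cPair f g => cPair (subst f D) (subst g D)
  | cRec f g => cRec (subst f D) (subst g D)
  | cMu f => cMu (subst f D)
  | c => c
  end.

Lemma subst_eval o o' D (HD : forall q v, o' q = Some v <-> eval o D q v) :
  forall c x y, eval o (subst c D) x y <-> eval o' c x y.
Proof.
  induction c; intros x y; cbn [subst];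
  try (split; intro H; inversion H; subst; constructor; fail).
  - split; intro H; [inversion H; subst; constructor; apply HD; auto|].
    inversion H; subst; apply HD; auto.
  - split; intro H; apply inv_comp in H as [a [A1 A2]]; econstructor;
    try apply IHc1; try apply IHc2; eauto.
  - split; intro H; apply inv_pair in H as [a [b [-> [A1 A2]]]]; constructor;
    try apply IHc1; try apply IHc2; eauto.
  - rewrite <- (pair_unpair x).
    revert y. generalize (fst (unpair x)) as y0. generalize (snd (unpair x)) as n.
    induction n; intros y0 y.
    + split; intro H; apply inv_rec0 in H; constructor; apply IHc1; auto.
    + split; intro H; apply inv_recS in H as [r [A1 A2]]; econstructor;
      try apply IHn; try apply IHc2; eauto.
  - split; intro H; apply inv_mu in H as [A1 A2]; constructor;
      try apply IHc; auto; intros z Hz; destruct (A2 z Hz) as [v [Hv Hv']];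
      exists v; split; auto; apply IHc; auto.
Qed.

Definition oracle_of (o : nat -> option nat) (D : code) : nat -> option nat :=
  fun z => match excluded_middle_informative (exists v, eval o D z v) with
           | left H => Some (proj1_sig (constructive_indefinite_description _ H))
           | right _ => None
           end.

Lemma oracle_of_spec o D : forall q v, oracle_of o D q = Some v <-> eval o D q v.
Proof.
  intros q v; unfold oracle_of.
  destruct (excluded_middle_informative _) as [H|H].
  - destruct (constructive_indefinite_description _ H) as [w Hw]; cbn.
    split; intro E.
    + injection E as <-; auto.
    + f_equal; eapply eval_det; eauto.
  - split; intro E; [discriminate|]. exfalso; apply H; eauto.
Qed.

Lemma subst_eval' o D c x y : eval o (subst c D) x y <-> eval (oracle_of o D) c x y.
Proof. apply subst_eval, oracle_of_spec. Qed.


Fixpoint constc (n : nat) : code :=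
  match n with 0 => cZero | S n => cComp cSucc (constc n) end.
Lemma den_constc n x : den (constc n) x = n.
Proof. induction n; cbn; auto. Qed.
Lemma pure_constc n : pureb (constc n) = true.
Proof. induction n; cbn; auto. Qed.

Definition ifz (t a b : code) : code := cComp (cRec a (cComp b cFst)) (cPair cId t).
Lemma den_ifz t a b x : den (ifz t a b) x = match den t x with 0 => den a x | S _ => den b x end.
Proof. unfold ifz; cbn. rewrite unpair_pair. destruct (den t x); repeat progress (cbn; rewrite ?unpair_pair); reflexivity. Qed.

Definition predc : code := cComp (cRec cZero (cComp cFst cSnd)) (cPair cZero cId).
Lemma den_predc x : den predc x = pred x.
Proof. unfold predc; cbn. rewrite unpair_pair. destruct x; repeat progress (cbn; rewrite ?unpair_pair); reflexivity. Qed.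

Arguments ifz : simpl never.
Arguments predc : simpl never.

Fixpoint switch (t : code) (cs : list code) (d : code) : code :=
  match cs with [] => d | c :: cs => ifz t c (switch (cComp predc t) cs d) end.
Lemma den_switch t cs d x : den (switch t cs d) x = nth (den t x) (map (fun c => den c x) cs) (den d x).
Proof. revert t; induction cs; intro t; cbn [switch]; [destruct (den t x); reflexivity|].
  rewrite den_ifz, IHcs. cbn. rewrite den_predc. destruct (den t x); reflexivity. Qed.
Arguments switch : simpl never.


Definition cc := cComp.
Definition pr := cPair.
Definition P1 := cFst.
Definition P2 := cSnd.
Definition consc h t := cc cSucc (pr h t).
Definition hdc l := cc P1 (cc predc l).
Definition tlc l := cc P2 (cc predc l).

Definition consL h t := S (pair h t).
Definition Val W e x := pair 0 (pair W (pair e x)).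
Definition Ev e x K := pair 1 (pair e (pair x K)).
Definition Ret v K := pair 2 (pair v K).
Definition fComp f := pair 0 f.
Definition fP1 g x := pair 1 (pair g x).
Definition fP2 a := pair 2 a.
Definition fRec g y m := pair 3 (pair g (pair y m)).
Definition fMu f x i := pair 4 (pair f (pair x i)).

Definition mkVal Wc E0X0 := pr (constc 0) (pr Wc E0X0).
Definition mkEv e x K := pr (constc 1) (pr e (pr x K)).
Definition mkRet v K := pr (constc 2) (pr v K).

Definition vW := cc P1 P2.
Definition vE0X0 := cc P2 P2.
Definition vtag := cc P1 (hdc vW).
Definition varg := cc P2 (hdc vW).
Definition vA0 := ifz varg (mkVal (tlc vW) vE0X0) cId.
Definition vA6 := mkVal (consc (cc P1 varg) (consc (cc P2 varg) (tlc vW))) vE0X0.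
Definition vA9 := mkVal (consc varg (tlc vW)) vE0X0.
Definition ValStep := ifz vW (mkEv (cc P1 vE0X0) (cc P2 vE0X0) (constc 0))
   (switch vtag [vA0;vA0;vA0;vA0;vA0;vA0;vA6;vA6;vA6;vA9] cId).

Definition ee := cc P1 P2.
Definition ex := cc P1 (cc P2 P2).
Definition eK := cc P2 (cc P2 P2).
Definition etag := cc P1 ee.
Definition earg := cc P2 ee.
Definition ef := cc P1 earg.
Definition eg := cc P2 earg.
Definition ey := cc P1 ex.
Definition em := cc predc (cc P2 ex).
Definition EvStep := switch etag [
  mkRet (constc 0) eK;
  mkRet (cc cSucc ex) eK;
  mkRet ex eK;
  mkRet (cc P1 ex) eK;
  mkRet (cc P2 ex) eK;
  cId;
  mkEv eg ex (consc (pr (constc 0) ef) eK);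
  mkEv ef ex (consc (pr (constc 1) (pr eg ex)) eK);
  ifz (cc P2 ex) (mkEv ef ey eK)
      (mkEv ee (pr ey em) (consc (pr (constc 3) (pr eg (pr ey em))) eK));
  mkEv earg (pr ex (constc 0)) (consc (pr (constc 4) (pr earg (pr ex (constc 0)))) eK)
  ] cId.

Definition rv := cc P1 P2.
Definition rK := cc P2 P2.
Definition rK' := tlc rK.
Definition rfd := cc P2 (hdc rK).
Definition rft := cc P1 (hdc rK).
Definition rf := cc P1 rfd.
Definition rx := cc P1 (cc P2 rfd).
Definition ri := cc P2 (cc P2 rfd).
Definition RetStep := ifz rK cId (switch rft [
  mkEv rfd rv rK';
  mkEv (cc P1 rfd) (cc P2 rfd) (consc (pr (constc 2) rv) rK');
  mkRet (pr rfd rv) rK';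
  mkEv rf (pr rx (pr ri rv)) rK';
  ifz rv (mkRet ri rK')
     (mkEv rf (pr rx (cc cSucc ri)) (consc (pr (constc 4) (pr rf (pr rx (cc cSucc ri)))) rK'))
  ] cId).

Definition StepP := switch P1 [ValStep; EvStep; RetStep] cId.
Definition Tc := switch P1 [constc 0; switch etag [constc 0;constc 0;constc 0;constc 0;constc 0;constc 1] (constc 0); constc 0] (constc 0).
Definition Hc := switch P1 [constc 1; constc 1; ifz (cc P2 P2) (constc 0) (constc 1)] (constc 1).

Lemma pure_StepP : pureb StepP = true. Proof. reflexivity. Qed.
Lemma pure_Tc : pureb Tc = true. Proof. reflexivity. Qed.
Lemma pure_Hc : pureb Hc = true. Proof. reflexivity. Qed.

Ltac dsimp := unfold StepP, ValStep, EvStep, RetStep, Tc, Hc, vW, vE0X0, vtag, varg, vA0, vA6, vA9, ee, ex, eK, etag, earg, ef, eg, ey, em, rv, rK, rK', rfd, rft, rf, rx, ri, mkVal, mkEv, mkRet, consc, hdc, tlc, cc, pr, P1, P2; unfold Ev, Val, Ret, consL, fComp, fP1, fP2, fRec, fMu; repeat progress (cbn; rewrite ?den_ifz, ?den_switch, ?den_predc, ?den_constc, ?unpair_pair).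


Definition xr := cc P1 (cc P2 P2).
Definition Kr := cc P2 (cc P2 P2).
Definition stepF (ans : nat -> nat) (r : nat) : nat :=
  match den Tc r with 0 => den StepP r | S _ => Ret (ans (den xr r)) (den Kr r) end.

Ltac sfs := intros; unfold stepF, xr, Kr; dsimp; reflexivity.

Section Steps.
Variable ans : nat -> nat.
Lemma sf_zero x K : stepF ans (Ev (encode cZero) x K) = Ret 0 K. Proof. sfs. Qed.
Lemma sf_succ x K : stepF ans (Ev (encode cSucc) x K) = Ret (S x) K. Proof. sfs. Qed.
Lemma sf_id x K : stepF ans (Ev (encode cId) x K) = Ret x K. Proof. sfs. Qed.
Lemma sf_fst x K : stepF ans (Ev (encode cFst) x K) = Ret (fst (unpair x)) K. Proof. sfs. Qed.
Lemma sf_snd x K : stepF ans (Ev (encode cSnd) x K) = Ret (snd (unpair x)) K. Proof. sfs. Qed.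
Lemma sf_ora x K : stepF ans (Ev (encode cOra) x K) = Ret (ans x) K. Proof. sfs. Qed.
Lemma sf_comp f g x K : stepF ans (Ev (encode (cComp f g)) x K) = Ev (encode g) x (consL (fComp (encode f)) K). Proof. sfs. Qed.
Lemma sf_pair f g x K : stepF ans (Ev (encode (cPair f g)) x K) = Ev (encode f) x (consL (fP1 (encode g) x) K). Proof. sfs. Qed.
Lemma sf_rec0 f g y K : stepF ans (Ev (encode (cRec f g)) (pair y 0) K) = Ev (encode f) y K. Proof. sfs. Qed.
Lemma sf_recS f g y m K : stepF ans (Ev (encode (cRec f g)) (pair y (S m)) K) =
  Ev (encode (cRec f g)) (pair y m) (consL (fRec (encode g) y m) K). Proof. sfs. Qed.
Lemma sf_mu f x K : stepF ans (Ev (encode (cMu f)) x K) = Ev (encode f) (pair x 0) (consL (fMu (encode f) x 0) K). Proof. sfs. Qed.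
Lemma sf_ret_nil v : stepF ans (Ret v 0) = Ret v 0. Proof. sfs. Qed.
Lemma sf_ret_comp v f K : stepF ans (Ret v (consL (fComp f) K)) = Ev f v K. Proof. sfs. Qed.
Lemma sf_ret_p1 a g x K : stepF ans (Ret a (consL (fP1 g x) K)) = Ev g x (consL (fP2 a) K). Proof. sfs. Qed.
Lemma sf_ret_p2 a b K : stepF ans (Ret b (consL (fP2 a) K)) = Ret (pair a b) K. Proof. sfs. Qed.
Lemma sf_ret_rec r g y m K : stepF ans (Ret r (consL (fRec g y m) K)) = Ev g (pair y (pair m r)) K. Proof. sfs. Qed.
Lemma sf_ret_mu0 f x i K : stepF ans (Ret 0 (consL (fMu f x i) K)) = Ret i K. Proof. sfs. Qed.
Lemma sf_ret_muS v f x i K : stepF ans (Ret (S v) (consL (fMu f x i) K)) =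
  Ev f (pair x (S i)) (consL (fMu f x (S i)) K). Proof. sfs. Qed.
Lemma sf_val_nil e x : stepF ans (Val 0 e x) = Ev e x 0. Proof. sfs. Qed.
Lemma sf_val_leaf tg t e x : tg <= 5 -> stepF ans (Val (consL (pair tg 0) t) e x) = Val t e x.
Proof. intro H. do 6 (destruct tg as [|tg]; [sfs|]). lia. Qed.
Lemma sf_val_leafbad tg ar t e x : tg <= 5 -> stepF ans (Val (consL (pair tg (S ar)) t) e x) = Val (consL (pair tg (S ar)) t) e x.
Proof. intro H. do 6 (destruct tg as [|tg]; [sfs|]). lia. Qed.
Lemma sf_val_bin tg f g t e x : 6 <= tg <= 8 -> stepF ans (Val (consL (pair tg (pair f g)) t) e x) = Val (consL f (consL g t)) e x.
Proof. intro H. do 6 (destruct tg as [|tg]; [lia|]). do 3 (destruct tg as [|tg]; [sfs|]). lia. Qed.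
Lemma sf_val_mu f t e x : stepF ans (Val (consL (pair 9 f) t) e x) = Val (consL f t) e x. Proof. sfs. Qed.
Lemma sf_val_bad tg ar t e x : stepF ans (Val (consL (pair (10 + tg) ar) t) e x) = Val (consL (pair (10 + tg) ar) t) e x.
Proof. unfold stepF, xr, Kr; dsimp; destruct tg; reflexivity. Qed.
End Steps.

Lemma Hc_spec s : den Hc s = 0 <-> exists v, s = Ret v 0.
Proof.
  rewrite <- (pair_unpair s). rewrite <- (pair_unpair (snd (unpair s))).
  generalize (fst (unpair s)) as ph. generalize (fst (unpair (snd (unpair s)))) as v.
  generalize (snd (unpair (snd (unpair s)))) as K. intros K v ph.
  unfold Hc, Ret. dsimp.
  destruct ph as [|[|[|ph]]]; cbn; try (split; [try destruct ph; discriminate|intros [w E]; apply pair_inj in E; destruct E; discriminate]).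
  destruct K; cbn; split.
  - intros _; eauto.
  - reflexivity.
  - discriminate.
  - intros [w E]. apply pair_inj in E as [_ E]. apply pair_inj in E as [_ E]. discriminate.
Qed.


Section Machine.
Variable ans : nat -> nat.
Notation it n s := (Nat.iter n (stepF ans) s).
Definition reach s t := exists n, it n s = t.

Lemma reach_refl s : reach s s. Proof. exists 0; reflexivity. Qed.
Lemma reach_step s t : reach (stepF ans s) t -> reach s t.
Proof. intros [n H]; exists (S n); rewrite Nat.iter_succ_r; auto. Qed.
Lemma reach_trans s t u : reach s t -> reach t u -> reach s u.
Proof. intros [n H] [m H']; exists (m + n); rewrite Nat.iter_add; congruence. Qed.

Lemma iter_fix n s : stepF ans s = s -> it n s = s.
Proof. intro H; induction n; [reflexivity|]; change (it (S n) s) with (stepF ans (it n s)); rewrite IHn; auto. Qed.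

Lemma Ret_nil_iter n v : it n (Ret v 0) = Ret v 0.
Proof. apply iter_fix, sf_ret_nil. Qed.

Ltac pinj := repeat match goal with
  | H : pair _ _ = pair _ _ |- _ => apply pair_inj in H; destruct H
  | H : S _ = S _ |- _ => injection H as H
  end; try discriminate; try lia.

Lemma Ev_neq e x K y : Ev e x K <> Ret y 0. Proof. unfold Ev, Ret; intro H; pinj. Qed.
Lemma Val_neq W e x y : Val W e x <> Ret y 0. Proof. unfold Val, Ret; intro H; pinj. Qed.
Lemma RetC_neq v h K y : Ret v (consL h K) <> Ret y 0. Proof. unfold consL, Ret; intro H; pinj. Qed.

Lemma fwd : forall c x y, eval (tot ans) c x y -> forall K, reach (Ev (encode c) x K) (Ret y K).
Proof.
  induction c; intros x y H K.
  - inversion H; subst. apply reach_step; rewrite sf_zero; apply reach_refl.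
  - inversion H; subst. apply reach_step; rewrite sf_succ; apply reach_refl.
  - inversion H; subst. apply reach_step; rewrite sf_id; apply reach_refl.
  - inversion H; subst. apply reach_step; rewrite sf_fst; apply reach_refl.
  - inversion H; subst. apply reach_step; rewrite sf_snd; apply reach_refl.
  - inversion H; subst. match goal with Hh : tot _ _ = Some _ |- _ => unfold tot in Hh; injection Hh as <- end.
    apply reach_step; rewrite sf_ora; apply reach_refl.
  - apply inv_comp in H as [a [A1 A2]].
    apply reach_step; rewrite sf_comp.
    eapply reach_trans; [apply IHc2; eauto|].
    apply reach_step; rewrite sf_ret_comp. apply IHc1; auto.
  - apply inv_pair in H as [a [b [-> [A1 A2]]]].
    apply reach_step; rewrite sf_pair.
    eapply reach_trans; [apply IHc1; eauto|].
    apply reach_step; rewrite sf_ret_p1.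
    eapply reach_trans; [apply IHc2; eauto|].
    apply reach_step; rewrite sf_ret_p2. apply reach_refl.
  - rewrite <- (pair_unpair x) in H |- *.
    revert y K H. generalize (fst (unpair x)) as y0. generalize (snd (unpair x)) as n.
    induction n; intros y0 y K H.
    + apply inv_rec0 in H. apply reach_step; rewrite sf_rec0. apply IHc1; auto.
    + apply inv_recS in H as [r [A1 A2]].
      apply reach_step; rewrite sf_recS.
      eapply reach_trans; [apply IHn; eauto|].
      apply reach_step; rewrite sf_ret_rec. apply IHc2; auto.
  - apply inv_mu in H as [A1 A2].
    apply reach_step; rewrite sf_mu.
    assert (L : forall d i, i + d = y -> reach (Ev (encode c) (pair x i) (consL (fMu (encode c) x i) K)) (Ret y K)).
    { induction d; intros i Hi.
      - replace i with y by lia.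
        eapply reach_trans; [apply IHc; eauto|].
        apply reach_step; rewrite sf_ret_mu0; apply reach_refl.
      - destruct (A2 i ltac:(lia)) as [v [Hv Hv']]. destruct v as [|v]; [congruence|].
        eapply reach_trans; [apply IHc; eauto|].
        apply reach_step; rewrite sf_ret_muS. apply IHd. lia. }
    apply (L y 0); lia.
Qed.

Lemma vfwd : forall c W e x, reach (Val W e x) (Ev e x 0) ->
  reach (Val (consL (encode c) W) e x) (Ev e x 0).
Proof.
  induction c; intros W e x H; cbn [encode];
  try (apply reach_step; rewrite sf_val_leaf by lia; exact H).
  - apply reach_step; rewrite sf_val_bin by lia. apply IHc1, IHc2, H.
  - apply reach_step; rewrite sf_val_bin by lia. apply IHc1, IHc2, H.
  - apply reach_step; rewrite sf_val_bin by lia. apply IHc1, IHc2, H.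
  - apply reach_step; rewrite sf_val_mu. apply IHc, H.
Qed.

Inductive allc : nat -> Prop :=
| allc_nil : allc 0
| allc_cons c t : allc t -> allc (consL (encode c) t).

Lemma allc_inv h t : allc (consL h t) -> exists c, h = encode c /\ allc t.
Proof. intro H; inversion H as [|c t' H1 E]. unfold consL in E. pinj. subst. eauto. Qed.

Lemma iter_S_inv n s y : it n s = Ret y 0 -> s <> Ret y 0 -> exists n', n = S n' /\ it n' (stepF ans s) = Ret y 0.
Proof. intros H Hs; destruct n; [cbn in H; congruence|]. exists n; split; auto. rewrite <- Nat.iter_succ_r; auto. Qed.

Lemma stuck_contra n s y : stepF ans s = s -> it n s = Ret y 0 -> s <> Ret y 0 -> False.
Proof. intros H1 H2 H3. rewrite iter_fix in H2; auto. Qed.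

Lemma vbwd : forall n W e x y, it n (Val W e x) = Ret y 0 ->
  allc W /\ exists m, m <= n /\ it m (Ev e x 0) = Ret y 0.
Proof.
  induction n as [n IH] using lt_wf_ind. intros W e x y H.
  destruct (iter_S_inv _ _ _ H (Val_neq _ _ _ _)) as [n' [-> H']].
  destruct W as [|p].
  - rewrite sf_val_nil in H'. split; [constructor|]. exists n'; split; auto.
  - rewrite <- (pair_unpair p) in H'. rewrite <- (pair_unpair (fst (unpair p))) in H'.
    assert (Ep : S p = consL (pair (fst (unpair (fst (unpair p)))) (snd (unpair (fst (unpair p))))) (snd (unpair p))).
    { unfold consL. rewrite !pair_unpair. reflexivity. }
    rewrite Ep. clear Ep.
    change (S (pair ?a ?b)) with (consL a b) in H'.
    generalize dependent (snd (unpair p)). generalize (snd (unpair (fst (unpair p)))) as ar.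
    generalize (fst (unpair (fst (unpair p)))) as tg. intros tg ar t H'.
    destruct (le_lt_dec tg 5) as [Hle|Hgt].
    + destruct ar as [|ar].
      * rewrite sf_val_leaf in H' by auto.
        destruct (IH n' ltac:(lia) _ _ _ _ H') as [Ha [m [Hm Hm']]].
        split; [|exists m; split; [lia|auto]].
        assert (Hc : exists c, pair tg 0 = encode c).
        { destruct tg as [|[|[|[|[|[|tg]]]]]]; [exists cZero|exists cSucc|exists cId|exists cFst|exists cSnd|exists cOra|lia]; reflexivity. }
        destruct Hc as [c ->]. constructor; auto.
      * exfalso. rewrite sf_val_leafbad in H' by exact Hle.
        eapply stuck_contra; [apply sf_val_leafbad; exact Hle | exact H' | apply Val_neq].
    + destruct (le_lt_dec tg 8) as [Hle8|Hgt8].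
      * rewrite <- (pair_unpair ar) in H' |- *.
        rewrite sf_val_bin in H' by lia.
        destruct (IH n' ltac:(lia) _ _ _ _ H') as [Ha [m [Hm Hm']]].
        split; [|exists m; split; [lia|auto]].
        apply allc_inv in Ha as [cf [Ef Ha]]. apply allc_inv in Ha as [cg [Eg Ha]].
        rewrite Ef, Eg.
        assert (Htg : tg = 6 \/ tg = 7 \/ tg = 8) by lia. destruct Htg as [ -> | [ -> | -> ] ].
        -- apply (allc_cons (cComp cf cg)); auto.
        -- apply (allc_cons (cPair cf cg)); auto.
        -- apply (allc_cons (cRec cf cg)); auto.
      * destruct (Nat.eq_dec tg 9) as [->|Hne].
        -- rewrite sf_val_mu in H'.
           destruct (IH n' ltac:(lia) _ _ _ _ H') as [Ha [m [Hm Hm']]].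
           split; [|exists m; split; [lia|auto]].
           apply allc_inv in Ha as [cf [Ef Ha]]. rewrite Ef.
           apply (allc_cons (cMu cf)); auto.
        -- exfalso. replace tg with (10 + (tg - 10)) in H' by lia.
           rewrite sf_val_bad in H'.
           eapply stuck_contra; [apply sf_val_bad| exact H' | apply Val_neq].
Qed.

Lemma bwd : forall n c x K y, it n (Ev (encode c) x K) = Ret y 0 ->
  exists w m, m < n /\ eval (tot ans) c x w /\ it m (Ret w K) = Ret y 0.
Proof.
  induction n as [n IH] using lt_wf_ind. intros c x K y H.
  destruct (iter_S_inv _ _ _ H (Ev_neq _ _ _ _)) as [n' [-> H']].
  destruct c.
  - rewrite sf_zero in H'. exists 0, n'; repeat split; auto; constructor.
  - rewrite sf_succ in H'. eexists _, n'; repeat split; eauto; constructor.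
  - rewrite sf_id in H'. eexists _, n'; repeat split; eauto; constructor.
  - rewrite sf_fst in H'. eexists _, n'; repeat split; eauto; constructor.
  - rewrite sf_snd in H'. eexists _, n'; repeat split; eauto; constructor.
  - rewrite sf_ora in H'. eexists _, n'; repeat split; eauto; constructor; reflexivity.
  - rewrite sf_comp in H'.
    destruct (IH n' ltac:(lia) _ _ _ _ H') as [a [m1 [Hm1 [Ea Ha]]]].
    destruct (iter_S_inv _ _ _ Ha (RetC_neq _ _ _ _)) as [m1' [-> Ha']].
    rewrite sf_ret_comp in Ha'.
    destruct (IH m1' ltac:(lia) _ _ _ _ Ha') as [b [m2 [Hm2 [Eb Hb]]]].
    exists b, m2; repeat split; [lia| econstructor; eauto | auto].
  - rewrite sf_pair in H'.
    destruct (IH n' ltac:(lia) _ _ _ _ H') as [a [m1 [Hm1 [Ea Ha]]]].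
    destruct (iter_S_inv _ _ _ Ha (RetC_neq _ _ _ _)) as [m1' [-> Ha']].
    rewrite sf_ret_p1 in Ha'.
    destruct (IH m1' ltac:(lia) _ _ _ _ Ha') as [b [m2 [Hm2 [Eb Hb]]]].
    destruct (iter_S_inv _ _ _ Hb (RetC_neq _ _ _ _)) as [m2' [-> Hb']].
    rewrite sf_ret_p2 in Hb'.
    exists (pair a b), m2'; repeat split; [lia| constructor; auto | auto].
  - rewrite <- (pair_unpair x) in H' |- *.
    generalize dependent (snd (unpair x)). intros j H'.
    destruct j as [|j].
    + rewrite sf_rec0 in H'.
      destruct (IH n' ltac:(lia) _ _ _ _ H') as [a [m1 [Hm1 [Ea Ha]]]].
      exists a, m1; repeat split; [lia|constructor; auto|auto].
    + rewrite sf_recS in H'.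
      destruct (IH n' ltac:(lia) _ _ _ _ H') as [r [m1 [Hm1 [Er Hr]]]].
      destruct (iter_S_inv _ _ _ Hr (RetC_neq _ _ _ _)) as [m1' [-> Hr']].
      rewrite sf_ret_rec in Hr'.
      destruct (IH m1' ltac:(lia) _ _ _ _ Hr') as [a [m2 [Hm2 [Ea Ha]]]].
      exists a, m2; repeat split; [lia|econstructor; eauto|auto].
  - rewrite sf_mu in H'.
    assert (L : forall k, k < S n' -> forall i, (forall z, z < i -> exists v, v <> 0 /\ eval (tot ans) c (pair x z) v) ->
      it k (Ev (encode c) (pair x i) (consL (fMu (encode c) x i) K)) = Ret y 0 ->
      exists w m, m < k /\ eval (tot ans) (cMu c) x w /\ it m (Ret w K) = Ret y 0).
    { induction k as [k IHk] using lt_wf_ind. intros Hk i Hpre Hit.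
      destruct (IH k Hk _ _ _ _ Hit) as [v [m1 [Hm1 [Ev' Hv]]]].
      destruct (iter_S_inv _ _ _ Hv (RetC_neq _ _ _ _)) as [m1' [-> Hv']].
      destruct v as [|v].
      - rewrite sf_ret_mu0 in Hv'. exists i, m1'; repeat split; [lia|constructor; auto|auto].
      - rewrite sf_ret_muS in Hv'.
        destruct (IHk m1' ltac:(lia) ltac:(lia) (S i)) as [w [m [Hm [Ew Hw]]]]; auto.
        + intros z Hz. destruct (Nat.eq_dec z i) as [->|Hne]; [exists (S v); split; auto|apply Hpre; lia].
        + exists w, m; repeat split; auto; lia. }
    destruct (L n' ltac:(lia) 0) as [w [m [Hm [Ew Hw]]]]; auto.
    + intros z Hz; lia.
    + exists w, m; repeat split; auto.
Qed.

Definition init (inp : nat) : nat :=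
  Val (consL (fst (unpair (snd (unpair inp)))) 0) (fst (unpair (snd (unpair inp)))) (snd (unpair (snd (unpair inp)))).

Lemma machine_fwd a e x y : Phi e (tot ans) x y ->
  exists n, it n (init (pair a (pair e x))) = Ret y 0.
Proof.
  intros [c [<- Hc]]. unfold init. rewrite !unpair_pair; cbn [fst snd]; rewrite !unpair_pair; cbn [fst snd].
  assert (R1 : reach (Val (consL (encode c) 0) (encode c) x) (Ev (encode c) x 0)).
  { apply vfwd. apply reach_step. rewrite sf_val_nil. apply reach_refl. }
  destruct (reach_trans _ _ _ R1 (fwd _ _ _ Hc 0)) as [n Hn]. exists n; exact Hn.
Qed.

Lemma machine_bwd a e x y n : it n (init (pair a (pair e x))) = Ret y 0 -> Phi e (tot ans) x y.
Proof.
  unfold init. rewrite !unpair_pair; cbn [fst snd]; rewrite !unpair_pair; cbn [fst snd]. intro H.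
  destruct (vbwd _ _ _ _ _ H) as [Ha [m [_ Hm]]].
  apply allc_inv in Ha as [c [-> _]].
  destruct (bwd _ _ _ _ _ Hm) as [w [m' [_ [Ew Hw]]]].
  rewrite Ret_nil_iter in Hw. unfold Ret in Hw. pinj. subst. exists c; auto.
Qed.

End Machine.


Definition Rz := cc P2 P2.
Definition Acode := cc P1 P1.
Definition OraB := mkRet (cc cOra (pr Acode (cc xr Rz))) (cc Kr Rz).
Definition Gc := cc (cRec (cc StepP Rz) (cc OraB P1)) (pr cId (cc Tc Rz)).
Definition Init := pr (constc 0) (pr (consc (cc P1 P2) (constc 0)) (pr (cc P1 P2) (cc P2 P2))).
Definition Rm := cRec Init Gc.
Definition Fc := cc Hc Rm.
Definition Out := cc (cc P1 P2) Rm.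
Definition Uc := cc Out (pr cId (cMu Fc)).

Lemma den_Init inp : den Init inp = init inp.
Proof. unfold Init, init, Val, consL, consc, cc, pr, P1, P2. cbn. reflexivity. Qed.

Lemma pure_Init : pureb Init = true. Proof. reflexivity. Qed.

Ltac us := repeat progress (cbn; rewrite ?unpair_pair).

Section U.
Variable o : nat -> option nat.
Variable ans : nat -> nat.
Variable a : nat.
Hypothesis Ho : forall q, o (pair a q) = Some (ans q).

Lemma eval_pure c x v : pureb c = true -> den c x = v -> eval o c x v.
Proof. intros H <-; apply pure_den; auto. Qed.

Lemma OraB_eval b n r : eval o OraB (pair (pair a b) (pair n r)) (Ret (ans (den xr r)) (den Kr r)).
Proof.
  unfold OraB, mkRet, Ret, pr. constructor.
  - apply eval_pure; [reflexivity|]. apply den_constc.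
  - constructor.
    + unfold cc at 1. econstructor; [|constructor; apply Ho].
      constructor; apply eval_pure; try reflexivity.
      * unfold Acode, cc, P1. us; reflexivity.
      * unfold Rz, cc, P2. us; reflexivity.
    + apply eval_pure; [reflexivity|]. unfold Rz, cc, P2. us; reflexivity.
Qed.

Lemma G_eval b n r : eval o Gc (pair (pair a b) (pair n r)) (stepF ans r).
Proof.
  set (z := pair (pair a b) (pair n r)).
  assert (Hz : den Rz z = r) by (unfold z, Rz, cc, P2; us; reflexivity).
  unfold Gc, cc at 1. econstructor.
  - apply eval_pure; [reflexivity|]. reflexivity.
  - change (den (pr cId (cc Tc Rz)) z) with (pair z (den Tc (den Rz z))). rewrite Hz.
    unfold stepF. destruct (den Tc r) as [|k].
    + constructor. apply eval_pure; [reflexivity|]. change (den StepP (den Rz z) = den StepP r). rewrite Hz. reflexivity.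
    + induction k.
      * econstructor; [constructor; apply eval_pure; [reflexivity|reflexivity]|].
        unfold cc. econstructor; [constructor|]. rewrite unpair_pair. cbn [fst]. apply OraB_eval.
      * econstructor; [exact IHk|].
        unfold cc. econstructor; [constructor|]. rewrite unpair_pair. cbn [fst]. apply OraB_eval.
Qed.

Lemma R_eval b n : eval o Rm (pair (pair a b) n) (Nat.iter n (stepF ans) (init (pair a b))).
Proof.
  induction n.
  - constructor. apply eval_pure; [reflexivity|]. apply den_Init.
  - econstructor; [exact IHn|]. apply G_eval.
Qed.

Lemma F_eval b n : eval o Fc (pair (pair a b) n) (den Hc (Nat.iter n (stepF ans) (init (pair a b)))).
Proof. unfold Fc, cc. econstructor; [apply R_eval|]. apply pure_den; reflexivity. Qed.

Lemma Out_eval b n : eval o Out (pair (pair a b) n) (fst (unpair (snd (unpair (Nat.iter n (stepF ans) (init (pair a b))))))).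
Proof. unfold Out, cc at 1. econstructor; [apply R_eval|]. apply pure_den; reflexivity. Qed.

Lemma minimize (P : nat -> Prop) : (exists n, P n) -> exists n, P n /\ forall z, z < n -> ~ P z.
Proof.
  intros [n Hn]. induction n as [n IH] using lt_wf_ind.
  destruct (classic (exists z, z < n /\ P z)) as [[z [Hz Pz]]|H].
  - exact (IH z Hz Pz).
  - exists n; split; auto. intros z Hz Pz; apply H; eauto.
Qed.

Theorem U_correct e x y : eval o Uc (pair a (pair e x)) y <-> Phi e (tot ans) x y.
Proof.
  set (inp := pair a (pair e x)).
  split.
  - intro H. unfold Uc, cc at 1 in H. apply inv_comp in H as [q [H1 H2]].
    apply inv_pair in H1 as [a' [n0 [-> [H1 H3]]]]. inversion H1; subst a'.
    apply inv_mu in H3 as [H3 _].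
    pose proof (eval_det _ _ _ _ _ H3 (F_eval _ _)) as Hh. symmetry in Hh.
    apply Hc_spec in Hh as [v Hv].
    pose proof (eval_det _ _ _ _ _ H2 (Out_eval _ _)) as Hy.
    rewrite Hv in Hy. unfold Ret in Hy. rewrite !unpair_pair in Hy. cbn in Hy.
    rewrite !unpair_pair in Hy. cbn in Hy. subst v.
    eapply machine_bwd; eauto.
  - intro H. destruct (machine_fwd _ a _ _ _ H) as [N HN]. change (pair a (pair e x)) with inp in HN.
    destruct (minimize (fun n => den Hc (Nat.iter n (stepF ans) (init inp)) = 0)) as [n0 [Hn0 Hmin]].
    { exists N. apply Hc_spec. eauto. }
    pose proof Hn0 as Hv. apply Hc_spec in Hv as [v Hv].
    assert (Hle : n0 <= N).
    { destruct (le_lt_dec n0 N); auto. exfalso. apply (Hmin N); auto. apply Hc_spec; eauto. }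
    assert (v = y).
    { replace N with ((N - n0) + n0) in HN by lia. rewrite Nat.iter_add, Hv, Ret_nil_iter in HN.
      unfold Ret in HN. apply pair_inj in HN as [_ HN]. apply pair_inj in HN; tauto. }
    subst v.
    unfold Uc, cc at 1. econstructor.
    + constructor; [constructor|]. constructor.
      * rewrite <- Hn0. apply F_eval.
      * intros z Hz. exists (den Hc (Nat.iter z (stepF ans) (init inp))). split; [apply Hmin; auto|apply F_eval].
    + replace y with (fst (unpair (snd (unpair (Nat.iter n0 (stepF ans) (init inp)))))).
      * apply Out_eval.
      * rewrite Hv. unfold Ret. rewrite !unpair_pair; cbn; rewrite !unpair_pair; reflexivity.
Qed.
End U.



Lemma join_odd g h k : join g h (S (k + k)) = h k.
Proof. unfold join. replace (S (k + k)) with (2 * k + 1) by lia. rewrite Nat.odd_odd, Nat.div2_odd'. reflexivity. Qed.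
Lemma join_even g h k : join g h (k + k) = g k.
Proof. unfold join. replace (k + k) with (2 * k) by lia. rewrite Nat.odd_even, Nat.div2_double. reflexivity. Qed.

Definition dbl := cComp (cRec cZero (cComp cSucc (cComp cSucc (cComp cSnd cSnd)))) (cPair cZero cId).
Lemma den_dbl q : den dbl q = q + q.
Proof. unfold dbl. cbn [den]. rewrite unpair_pair. cbn [fst snd]. induction q; [reflexivity|]. cbn [nat_rect]. rewrite IHq. us. lia. Qed.

Definition pdR := cc P2 P2.
Definition pd := cComp (cRec (cPair cZero cZero)
   (ifz (cc P2 pdR) (pr (cc P1 pdR) (constc 1)) (pr (cc cSucc (cc P1 pdR)) (constc 0)))) (cPair cZero cId).
Lemma den_pd q : den pd q = pair (Nat.div2 q) (Nat.b2n (Nat.odd q)).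
Proof.
  unfold pd. cbn [den]. rewrite unpair_pair. cbn [nat_rect]. induction q; [reflexivity|].
  cbn [nat_rect]. rewrite IHq. remember (S q) as sq eqn:Esq. rewrite den_ifz. unfold pdR, cc, pr, P1, P2. us.
  pose proof (Nat.div2_odd q) as Hq.
  destruct (Nat.odd q) eqn:E; cbn [Nat.b2n] in Hq |- *; rewrite ?den_constc.
  - replace sq with (2 * (S (Nat.div2 q))) by lia. rewrite Nat.div2_double, Nat.odd_even. reflexivity.
  - replace sq with (2 * (Nat.div2 q) + 1) by lia. rewrite Nat.div2_odd', Nat.odd_odd. reflexivity.
Qed.
Definition divc := cc P1 pd.
Definition parc := cc P2 pd.
Lemma den_divc q : den divc q = Nat.div2 q.
Proof. unfold divc, cc, P1. cbn [den]. rewrite den_pd, unpair_pair. reflexivity. Qed.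
Lemma den_parc q : den parc q = Nat.b2n (Nat.odd q).
Proof. unfold parc, cc, P2. cbn [den]. rewrite den_pd, unpair_pair. reflexivity. Qed.

Lemma eval_ifz0 o t a b x y : pureb t = true -> den t x = 0 -> (eval o (ifz t a b) x y <-> eval o a x y).
Proof.
  intros Hp Ht. unfold ifz. split; intro H.
  - apply inv_comp in H as [q [H1 H2]]. apply inv_pair in H1 as [u [v [-> [H1 H3]]]].
    inversion H1; subst. apply (pure_iff _ _ _ _ Hp) in H3. rewrite Ht in H3; subst.
    apply inv_rec0 in H2; auto.
  - econstructor; [constructor; [constructor|apply pure_den; auto]|]. rewrite Ht. constructor; auto.
Qed.

Lemma eval_ifzS o t a b x y k ya : pureb t = true -> den t x = S k -> eval o a x ya ->
  (eval o (ifz t a b) x y <-> eval o b x y).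
Proof.
  intros Hp Ht Ha. unfold ifz. split; intro H.
  - apply inv_comp in H as [q [H1 H2]]. apply inv_pair in H1 as [u [v [-> [H1 H3]]]].
    inversion H1; subst. apply (pure_iff _ _ _ _ Hp) in H3. rewrite Ht in H3; subst.
    apply inv_recS in H2 as [r [_ H2]]. apply inv_comp in H2 as [w [H4 H5]].
    inversion H4; subst. rewrite unpair_pair in H5; auto.
  - econstructor; [constructor; [constructor|apply pure_den; auto]|]. rewrite Ht.
    assert (L : forall j, eval o (cRec a (cComp b cFst)) (pair x (S j)) y).
    { induction j.
      - econstructor; [constructor; exact Ha|]. econstructor; [constructor|]. rewrite unpair_pair. exact H.
      - econstructor; [exact IHj|]. econstructor; [constructor|]. rewrite unpair_pair. exact H. }
    apply L.
Qed.

Lemma eval_pure' o c x v : pureb c = true -> den c x = v -> eval o c x v.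
Proof. intros H <-; apply pure_den; auto. Qed.

Lemma comp_code Y g : computable_in Y g -> exists c, forall x, eval (chi Y) c x (g x).
Proof.
  intros [e He]. destruct (He 0) as [c0 [E0 _]]. exists c0. intro x.
  destruct (He x) as [c [E H]]. rewrite <- E0 in E. apply encode_inj in E. subst; auto.
Qed.

Definition Ucorr := U_correct.

Lemma some_iff (a b : nat) : Some a = Some b <-> b = a.
Proof. split; [intro H; injection H; auto | intros ->; reflexivity]. Qed.

Lemma some_eq (a b : nat) : Some a = Some b -> a = b.
Proof. intro H; injection H; auto. Qed.

Lemma Phi_code' e c o x v m : e = encode c -> eval o c x v -> (Phi e o x m <-> m = v).
Proof. intros ->; apply Phi_code. Qed.

Section Bside.
Variable X : nat -> bool.
Definition Xbit (n : nat) : nat := if X n then 1 else 0.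

Lemma pc_const n : partial_computable_in X (fun _ => Some n).
Proof.
  exists (encode (constc n)). intros k m.
  rewrite (Phi_code (constc n) (chi X) k n m) by (apply eval_pure'; [apply pure_constc|apply den_constc]).
  split; intro H; [injection H; auto|subst; auto].
Qed.

Lemma pc_empty : partial_computable_in X (fun _ => None).
Proof.
  exists (encode (cMu cSucc)). intros k m. split; intro H; [discriminate|].
  destruct H as [c [E H]]. apply encode_inj in E; subst. apply inv_mu in H as [H _]. inversion H.
Qed.

Definition Scode := cComp cSucc (cComp cOra (cComp cSucc dbl)).
Definition eS := encode Scode.
Lemma eS_eq : eS = encode Scode. Proof. unfold eS. reflexivity. Qed.

Lemma Bapp_S n : Bapp (fun _ => Some eS) (fun _ => Some n) (fun _ => Some (S n)).
Proof.
  intros k m.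
  assert (Hv : eval (join (fun _ => Some eS) (fun _ => Some n)) Scode k (S n)).
  { unfold Scode. econstructor; [|constructor]. econstructor.
    - apply eval_pure'; [reflexivity|]. cbn [den]. rewrite den_dbl. reflexivity.
    - constructor. rewrite join_odd. reflexivity. }
  split.
  - intro H. apply (f_equal (fun o => match o with Some v => v | None => 0 end)) in H.
    cbv beta iota in H. subst m. exists eS; split; auto. apply (Phi_code' eS Scode _ _ _ _ eS_eq Hv). reflexivity.
  - intros [e [E H]]. apply (f_equal (fun o => match o with Some v => v | None => 0 end)) in E.
    cbv beta iota in E. subst e. apply (Phi_code' eS Scode _ _ _ _ eS_eq Hv) in H. congruence.
Qed.

Definition Dx := cComp cOra (cComp (cComp cSucc (cComp cSucc dbl)) cSnd).
Definition Nn := cComp cOra (constc 1).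
Definition PH := cComp cZero (cComp (subst Uc Dx) (cPair cZero (cPair Nn Nn))).
Definition eH := encode PH.
Lemma eH_eq : eH = encode PH. Proof. unfold eH. reflexivity. Qed.
Definition Hf : nat -> option nat := fun x => match x with 0 => Some eH | S x' => Some (Xbit x') end.
Definition Hcode := cComp (cRec (constc eH) (cComp cOra (cComp cFst cSnd))) (cPair cZero cId).

Lemma Hcode_eval x : eval (chi X) Hcode x (match x with 0 => eH | S x' => Xbit x' end).
Proof.
  unfold Hcode. econstructor; [constructor; constructor|].
  destruct x as [|x].
  - constructor. apply eval_pure'; [apply pure_constc|apply den_constc].
  - assert (L : forall j, exists r, eval (chi X) (cRec (constc eH) (cComp cOra (cComp cFst cSnd))) (pair 0 j) r).
    { induction j.
      - eexists; constructor; apply pure_den; apply pure_constc.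
      - destruct IHj as [r Hr]. eexists; econstructor; [exact Hr|].
        econstructor; [apply eval_pure'; [reflexivity|]; us; reflexivity|]. constructor; reflexivity. }
    destruct (L x) as [r Hr]. econstructor; [exact Hr|].
    econstructor; [apply eval_pure'; [reflexivity|]; us; reflexivity|]. constructor. reflexivity.
Qed.

Lemma pc_H : partial_computable_in X Hf.
Proof.
  exists (encode Hcode). intros k m.
  rewrite (Phi_code _ _ _ _ m (Hcode_eval k)).
  destruct k; [change (Hf 0) with (Some eH) | change (Hf (S k)) with (Some (Xbit k))]; exact (some_iff _ _).
Qed.

Lemma PH_sem n k m : eval (join Hf (fun _ => Some n)) PH k m <-> m = 0 /\ jump X n.
Proof.
  set (O := join Hf (fun _ => Some n)).
  assert (HN : forall v, eval O Nn k v <-> v = n).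
  { intro v. split; intro H.
    - apply inv_comp in H as [w [H1 H2]]. apply (pure_iff _ _ _ _ (pure_constc 1)) in H1.
      rewrite den_constc in H1; subst. inversion H2; subst. unfold O in *. cbn in *. congruence.
    - subst. econstructor; [apply eval_pure'; [apply pure_constc|apply den_constc]|]. constructor. reflexivity. }
  assert (HU : forall y, eval O (subst Uc Dx) (pair 0 (pair n n)) y <-> Phi n (chi X) n y).
  { intro y. rewrite subst_eval'. apply (Ucorr _ Xbit 0).
    intro q. apply oracle_of_spec. unfold Dx. econstructor.
    - apply eval_pure'; [reflexivity|]. cbn [den]. rewrite den_dbl. us. reflexivity.
    - constructor. unfold O. replace (S (S (q + q))) with (S q + S q) by lia. rewrite join_even. reflexivity. }
  split.
  - intro H. unfold PH in H. apply inv_comp in H as [w [H1 H2]]. inversion H2; subst. split; auto.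
    apply inv_comp in H1 as [p [H3 H4]]. apply inv_pair in H3 as [u [v [-> [H5 H6]]]].
    inversion H5; subst. apply inv_pair in H6 as [a1 [a2 [-> [H7 H8]]]].
    apply HN in H7; apply HN in H8; subst. apply HU in H4. exists w; auto.
  - intros [-> [w Hw]]. unfold PH. econstructor; [|constructor]. econstructor.
    + constructor; [constructor|]. constructor; apply HN; reflexivity.
    + apply HU; exact Hw.
Qed.

Definition tf (n : nat) : nat -> option nat :=
  if excluded_middle_informative (jump X n) then (fun _ => Some 0) else (fun _ => None).

Lemma Bapp_H n : Bapp Hf (fun _ => Some n) (tf n).
Proof.
  intros k m. split.
  - intro H. exists eH; split; [exact eq_refl|]. exists PH; split; [exact (eq_sym eH_eq)|].
    apply PH_sem. unfold tf in H. destruct (excluded_middle_informative _); [injection H; auto|discriminate].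
  - intros [e [E [c [Ec H]]]]. change (Hf 0) with (Some eH) in E. apply some_eq in E. subst e.
    rewrite eH_eq in Ec. apply encode_inj in Ec. subst.
    apply PH_sem in H as [-> Hj]. unfold tf. destruct (excluded_middle_informative _); [reflexivity|contradiction].
Qed.
End Bside.



Lemma join_tot (a b : nat -> nat) :
  join (tot a) (tot b) = tot (fun q => if Nat.odd q then b (Nat.div2 q) else a (Nat.div2 q)).
Proof. apply functional_extensionality; intro q; unfold join, tot; destruct (Nat.odd q); reflexivity. Qed.

Lemma nth_eq_test v0 r : nth r (repeat 0 v0 ++ [1]) 0 = if r =? v0 then 1 else 0.
Proof.
  revert r; induction v0; intro r; destruct r as [|r]; cbn; auto;
  try (destruct r; reflexivity); try (rewrite IHv0; reflexivity).
Qed.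

Lemma pure_ifz t a b : pureb t = true -> pureb a = true -> pureb b = true -> pureb (ifz t a b) = true.
Proof. intros; unfold ifz; cbn [pureb]; rewrite H, H0, H1; reflexivity. Qed.

Lemma pure_switch t cs d : pureb t = true -> Forall (fun c => pureb c = true) cs -> pureb d = true ->
  pureb (switch t cs d) = true.
Proof.
  intros Ht Hcs Hd. revert t Ht; induction Hcs as [|c cs Hc Hcs IH]; intros t Ht; [exact Hd|].
  cbn [switch]. apply pure_ifz; [exact Ht|exact Hc|]. apply IH. cbn [pureb]; rewrite Ht; reflexivity.
Qed.

Ltac pureT := unfold pr, cc, P1, P2; cbn [pureb]; rewrite ?pure_constc; reflexivity.

Section Yside.
Variable Y : nat -> bool.
Definition Ybit (n : nat) : nat := if Y n then 1 else 0.
Variables (s h : nat -> nat) (gseq : nat -> nat -> nat) (cs cg0 ch : code).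
Hypothesis Hcs : forall x, eval (chi Y) cs x (s x).
Hypothesis Hcg0 : forall x, eval (chi Y) cg0 x (gseq 0 x).
Hypothesis Hch : forall x, eval (chi Y) ch x (h x).
Hypothesis Hrec : forall n x, Phi (s 0) (join (tot s) (tot (gseq n))) x (gseq (S n) x).

Definition Uplain := subst Uc (cComp cOra cSnd).
Lemma Uplain_ok e x y : eval (chi Y) Uplain (pair 0 (pair e x)) y <-> Phi e (chi Y) x y.
Proof.
  unfold Uplain. rewrite subst_eval'. apply (Ucorr _ Ybit 0).
  intro q. apply oracle_of_spec. econstructor; [apply eval_pure'; [reflexivity|]; us; reflexivity|].
  constructor. reflexivity.
Qed.

Definition Qc := P2.
Definition Wq := cc P1 P1.
Definition Mq := cc P2 P1.
Definition Dq := ifz (cc parc Qc) (cc cs (cc divc Qc))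
  (cc Uplain (pr (constc 0) (pr Wq (pr Wq (pr Mq (cc divc Qc)))))).
Definition Nc := cc P1 P2.
Definition Xc := cc P2 P2.
Definition Gp := ifz Nc (cc cg0 Xc) (cc (subst Uc Dq) (pr (pr P1 (cc predc Nc)) (pr (constc (s 0)) Xc))).
Definition wG := encode Gp.
Lemma wG_eq : wG = encode Gp. Proof. unfold wG. reflexivity. Qed.

Lemma pure_parc : pureb (cc parc Qc) = true. Proof. reflexivity. Qed.

Lemma Gclaim : forall n x, eval (chi Y) Gp (pair wG (pair n x)) (gseq n x).
Proof.
  induction n; intro x.
  - unfold Gp. rewrite eval_ifz0; [| reflexivity | unfold Nc, cc, P1, P2; us; reflexivity].
    econstructor; [apply eval_pure'; [reflexivity|]; unfold Xc, cc, P2; us; reflexivity|]. apply Hcg0.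
  - unfold Gp. rewrite (eval_ifzS _ _ _ _ _ _ n (gseq 0 x)); [| reflexivity | unfold Nc, cc, P1, P2; us; reflexivity |].
    2:{ econstructor; [apply eval_pure'; [reflexivity|]; unfold Xc, cc, P2; us; reflexivity|]. apply Hcg0. }
    econstructor.
    + apply eval_pure'; [unfold Nc, Xc; pureT|]. unfold Nc, Xc, cc, pr, P1, P2. us. rewrite den_predc, den_constc. reflexivity.
    + rewrite subst_eval'.
      apply (Ucorr _ (fun q => if Nat.odd q then gseq n (Nat.div2 q) else s (Nat.div2 q)) (pair wG n)).
      * intro q. apply oracle_of_spec. unfold Dq.
        assert (Hp : den (cc parc Qc) (pair (pair wG n) q) = Nat.b2n (Nat.odd q)).
        { unfold cc, Qc, P2. cbn [den]. rewrite unpair_pair. apply den_parc. }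
        assert (Hs : eval (chi Y) (cc cs (cc divc Qc)) (pair (pair wG n) q) (s (Nat.div2 q))).
        { econstructor; [apply eval_pure'; [reflexivity|]|apply Hcs].
          unfold cc, Qc, P2. cbn [den]. rewrite unpair_pair. apply den_divc. }
        destruct (Nat.odd q) eqn:Eo.
        -- rewrite (eval_ifzS _ _ _ _ _ _ 0 _ pure_parc Hp Hs).
           econstructor.
           ++ apply eval_pure'; [reflexivity|]. unfold Wq, Mq, Qc, cc, pr, P1, P2. cbn [den]. rewrite !unpair_pair. cbn [fst snd]. rewrite !unpair_pair. cbn [fst snd]. rewrite den_divc. reflexivity.
           ++ apply Uplain_ok. exists Gp; split; [symmetry; exact wG_eq|]. apply IHn.
        -- rewrite (eval_ifz0 _ _ _ _ _ _ pure_parc Hp). exact Hs.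
      * rewrite <- join_tot. apply Hrec.
Qed.

Definition Gfull := cc Gp (pr (constc wG) cId).
Lemma Gfull_ok n x : eval (chi Y) Gfull (pair n x) (gseq n x).
Proof.
  unfold Gfull. econstructor; [|apply Gclaim].
  apply eval_pure'; [pureT|]. unfold pr. cbn [den]. rewrite den_constc. reflexivity.
Qed.

Variables (rseq : nat -> nat -> nat) (p v0 : nat).
Hypothesis HR : forall n, Phi (h 0) (join (tot h) (tot (gseq n))) p (rseq n p).

Definition Dh := ifz (cc parc Qc) (cc ch (cc divc Qc)) (cc Gfull (pr P1 (cc divc Qc))).
Definition Rr := cc (subst Uc Dh) (pr cId (constc (pair (h 0) p))).
Definition EQc := switch cId (repeat (constc 0) v0 ++ [constc 1]) (constc 0).
Definition Dec := cc EQc Rr.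

Lemma den_EQc r : den EQc r = if r =? v0 then 1 else 0.
Proof.
  unfold EQc. rewrite den_switch, map_app, map_repeat. cbn. rewrite ?den_constc. apply nth_eq_test.
Qed.

Lemma Rr_ok n : eval (chi Y) Rr n (rseq n p).
Proof.
  unfold Rr. econstructor.
  - apply eval_pure'; [pureT|]. unfold pr. cbn [den]. rewrite den_constc. reflexivity.
  - rewrite subst_eval'.
    apply (Ucorr _ (fun q => if Nat.odd q then gseq n (Nat.div2 q) else h (Nat.div2 q)) n).
    + intro q. apply oracle_of_spec. unfold Dh.
      assert (Hp : den (cc parc Qc) (pair n q) = Nat.b2n (Nat.odd q)).
      { unfold cc, Qc, P2. cbn [den]. rewrite unpair_pair. apply den_parc. }
      assert (Hs : eval (chi Y) (cc ch (cc divc Qc)) (pair n q) (h (Nat.div2 q))).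
      { econstructor; [apply eval_pure'; [reflexivity|]|apply Hch].
        unfold cc, Qc, P2. cbn [den]. rewrite unpair_pair. apply den_divc. }
      destruct (Nat.odd q) eqn:Eo.
      * rewrite (eval_ifzS _ _ _ _ _ _ 0 _ pure_parc Hp Hs).
        econstructor; [|apply Gfull_ok].
        apply eval_pure'; [reflexivity|]. unfold Qc, cc, pr, P1, P2. cbn [den]. rewrite !unpair_pair. cbn [fst snd]. rewrite den_divc. reflexivity.
      * rewrite (eval_ifz0 _ _ _ _ _ _ pure_parc Hp). exact Hs.
    + rewrite <- join_tot. apply HR.
Qed.

Lemma Dec_ok n : eval (chi Y) Dec n (if rseq n p =? v0 then 1 else 0).
Proof.
  unfold Dec. econstructor; [apply Rr_ok|]. apply eval_pure'; [|apply den_EQc].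
  unfold EQc. apply pure_switch; [reflexivity| |apply pure_constc].
  apply Forall_app; split; [apply Forall_forall; intros c Hc; apply repeat_spec in Hc; subst; reflexivity|].
  repeat constructor.
Qed.
End Yside.


Theorem corollary6p15 (X Y : nat -> bool) :
  (exists f : BX X -> K2Y Y, pca_embedding X Y f) -> turing_le (jump X) Y.
Proof.
  intros [f [Hinj Hhom]].
  pose (cel := fun n => exist (partial_computable_in X) (fun _ : nat => Some n) (pc_const X n) : BX X).
  pose (Hel := exist (partial_computable_in X) (Hf X) (pc_H X) : BX X).
  pose (eel := exist (partial_computable_in X) (fun _ : nat => None) (pc_empty X) : BX X).
  pose (tel := fun n => if excluded_middle_informative (jump X n) then cel 0 else eel).
  pose (gseq := fun n => proj1_sig (f (cel n))).
  pose (s := proj1_sig (f (cel eS))).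
  pose (h := proj1_sig (f Hel)).
  pose (rseq := fun n => proj1_sig (f (tel n))).
  assert (KS : forall n x, Phi (s 0) (join (tot s) (tot (gseq n))) x (gseq (S n) x)).
  { intros n x. exact (Hhom (cel eS) (cel n) (cel (S n)) (Bapp_S n) x). }
  assert (KH : forall n x, Phi (h 0) (join (tot h) (tot (gseq n))) x (rseq n x)).
  { intros n x. apply (Hhom Hel (cel n) (tel n)).
    replace (proj1_sig (tel n)) with (tf X n); [apply Bapp_H|].
    unfold tel, tf. destruct (excluded_middle_informative (jump X n)); reflexivity. }
  destruct (comp_code _ _ (proj2_sig (f (cel eS)))) as [cs Hcs].
  destruct (comp_code _ _ (proj2_sig (f (cel 0)))) as [cg0 Hcg0].
  destruct (comp_code _ _ (proj2_sig (f Hel))) as [ch Hch].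
  assert (Hp : exists p, proj1_sig (f (cel 0)) p <> proj1_sig (f eel) p).
  { apply NNPP; intro Hn.
    assert (E : proj1_sig (f (cel 0)) = proj1_sig (f eel)).
    { apply functional_extensionality; intro p. apply NNPP; intro Hne. apply Hn; eauto. }
    apply Hinj in E. cbn in E. apply (f_equal (fun g => g 0)) in E. discriminate. }
  destruct Hp as [p Hp].
  pose proof (Dec_ok Y s h gseq cs cg0 ch Hcs Hcg0 Hch KS rseq p (proj1_sig (f (cel 0)) p) (fun n => KH n p)) as HD.
  eexists. intro n. split; intro Hj.
  - apply (proj2 (Phi_code _ _ _ _ _ (HD n))).
    unfold rseq, tel. destruct (excluded_middle_informative (jump X n)); [|contradiction].
    rewrite Nat.eqb_refl. reflexivity.
  - apply (proj2 (Phi_code _ _ _ _ _ (HD n))).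
    unfold rseq, tel. destruct (excluded_middle_informative (jump X n)); [contradiction|].
    destruct (Nat.eqb_spec (proj1_sig (f eel) p) (proj1_sig (f (cel 0)) p)); [|reflexivity].
    exfalso; apply Hp; auto.
Qed.
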